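(* For every $\omega\in S$ and every $\epsilon>0$ there exist $\omega'\in S$ with $|\omega'-\omega|<\epsilon$ and a Seifert matrix $V$ such that $\Delta_V(t)$ has exactly two nonreal roots, namely $\omega'$ and $\bar\omega'$, both simple and lying on the unit circle. Consequently, as a function of $\zeta\in S$, $\sigma_\zeta(V)=0$ whenever $\mathrm{Re}\,\zeta>\mathrm{Re}\,\omega'$, and $\sigma_\zeta(V)$ equals a nonzero constant whenever $\mathrm{Re}\,\zeta<\mathrm{Re}\,\omega'$.
   Context: A Seifert matrix is a square integral matrix $V$ with $\det(V-V^T)=\pm1$; $\Delta_V(t)=\det(V-tV^T)$; for a unit complex number $\zeta$, $\sigma_\zeta(V)$ is the signature of $(1-\zeta)V+(1-\bar\zeta)V^T$. $S$ is the set of unit complex numbers with positive imaginary part. *)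

(* Defs.v *)
From HB Require Import structures.
From mathcomp Require Import all_boot all_order all_algebra.
From mathcomp Require Import reals complex.
Set Implicit Arguments. Unset Strict Implicit. Unset Printing Implicit Defensive.
Import Order.TTheory GRing.Theory Num.Theory.
Local Open Scope ring_scope.

Definition seifert (n : nat) (V : 'M[int]_n) : Prop :=
  \det (V - V^T) = 1 \/ \det (V - V^T) = -1.

Definition mxC (R : realType) (n : nat) (V : 'M[int]_n) : 'M[R[i]]_n :=
  map_mx (fun x : int => x%:~R) V.

Definition alexC (R : realType) (n : nat) (V : 'M[int]_n) : {poly R[i]} :=
  \det (map_mx polyC (mxC R V) - 'X *: map_mx polyC (mxC R V)^T).

Definition inS (R : realType) (z : R[i]) : Prop := `|z| = 1 /\ 0 < 'Im z.

(* Eigenvalues (with multiplicity) of a complex square matrix: the roots of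
   its characteristic polynomial, listed with multiplicity. *)
Definition eigenseq (R : realType) (n : nat) (A : 'M[R[i]]_n) : seq R[i] :=
  sval (closed_field_poly_normal (char_poly A)).

Definition signature (R : realType) (n : nat) (A : 'M[R[i]]_n) : int :=
  (count (fun z => 0 < z) (eigenseq A))%:Z - (count (fun z => z < 0) (eigenseq A))%:Z.

Definition tl_sig (R : realType) (n : nat) (V : 'M[int]_n) (zeta : R[i]) : int :=
  signature ((1 - zeta) *: mxC R V + (1 - zeta^*) *: (mxC R V)^T).

(* Main.v *)
Require Import Defs.
From HB Require Import structures.
From mathcomp Require Import all_boot all_order all_algebra.
From mathcomp Require Import reals complex.
From mathcomp Require Import ring lra.
Import Order.TTheory GRing.Theory Num.Theory.
Local Open Scope ring_scope.

Module Aux.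
Set Implicit Arguments. Unset Strict Implicit. Unset Printing Implicit Defensive.

Section D.
Variable T : comNzRingType.
Definition subf (f : nat -> nat -> T) (j k l : nat) := f (bump 0 k) (bump j l).

Lemma det_stepf n (f : nat -> nat -> T) :
  \det (\matrix_(i < n.+1, j < n.+1) f i j) =
  \sum_(j < n.+1) f 0%N j * (-1) ^+ j * \det (\matrix_(k < n, l < n) subf f j k l).
Proof.
rewrite (expand_det_row _ ord0); apply: eq_bigr => j _.
rewrite mxE /cofactor add0n mulrA; congr (_ * \det _).
by apply/matrixP => k l; rewrite !mxE.
Qed.

Lemma det1f (f : nat -> nat -> T) : \det (\matrix_(i < 1, j < 1) f i j) = f 0%N 0%N.
Proof. by rewrite det_mx11 mxE. Qed.

Lemma det2f (f : nat -> nat -> T) : \det (\matrix_(i < 2, j < 2) f i j) =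
  f 0 0 * f 1 1 - f 0 1 * f 1 0.
Proof.
rewrite det_stepf !big_ord_recl big_ord0 !det1f /subf /bump /=. ring.
Qed.

Definition d3 (f : nat -> nat -> T) :=
  f 0 0 * (f 1 1 * f 2 2 - f 1 2 * f 2 1)
  - f 0 1 * (f 1 0 * f 2 2 - f 1 2 * f 2 0)
  + f 0 2 * (f 1 0 * f 2 1 - f 1 1 * f 2 0).

Lemma det3f (f : nat -> nat -> T) : \det (\matrix_(i < 3, j < 3) f i j) = d3 f.
Proof.
rewrite det_stepf !big_ord_recl big_ord0 !det2f /subf /bump /= /d3. ring.
Qed.

Definition d4 (f : nat -> nat -> T) :=
  f 0 0 * d3 (subf f 0)
  - f 0 1 * d3 (subf f 1)
  + f 0 2 * d3 (subf f 2)
  - f 0 3 * d3 (subf f 3).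

Lemma det4f (f : nat -> nat -> T) : \det (\matrix_(i < 4, j < 4) f i j) = d4 f.
Proof.
rewrite det_stepf !big_ord_recl big_ord0 !det3f /= /d4. ring.
Qed.
End D.

Section B2.

Definition vf (a b d : int) (i j : nat) : int :=
  match i, j with
  | 0, 0 => a | 0, 1 => b | 1, 0 => b | 1, 1 => d
  | 0, 2 => 1 | 1, 3 => 1 | 2, 2 => 1 | 3, 3 => 1
  | _, _ => 0 end.
Definition Vm a b d : 'M[int]_4 := \matrix_(i < 4, j < 4) vf a b d i j.

Lemma seifV a b d : seifert (Vm a b d).
Proof.
left.
have -> : Vm a b d - (Vm a b d)^T = \matrix_(i < 4, j < 4) (vf a b d i j - vf a b d j i).
  by apply/matrixP => i j; rewrite !mxE.
rewrite (det4f (fun i j => vf a b d i j - vf a b d j i)) /d4 /d3 /subf /bump /vf /=. ring.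
Qed.

Lemma alexV (R : realType) a b d : alexC R (Vm a b d) =
  let A := (a%:~R : R[i])%:P in let B := (b%:~R : R[i])%:P in let D := (d%:~R : R[i])%:P in
  ((1 - 'X)^+2 * A + 'X) * ((1 - 'X)^+2 * D + 'X) - (1 - 'X)^+4 * B^+2.
Proof.
rewrite /alexC.
have -> : map_mx polyC (mxC R (Vm a b d)) - 'X *: map_mx polyC (mxC R (Vm a b d))^T =
   \matrix_(i < 4, j < 4) (((vf a b d i j)%:~R : R[i])%:P - 'X * ((vf a b d j i)%:~R)%:P).
  by apply/matrixP => i j; rewrite !mxE.
rewrite (det4f (fun i j => ((vf a b d i j)%:~R : R[i])%:P - 'X * ((vf a b d j i)%:~R)%:P)) /d4 /d3 /subf /bump /vf /=. ring.
Qed.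

Definition Hm (R : realType) (n : nat) (V : 'M[int]_n) (zeta : R[i]) :=
  (1 - zeta) *: mxC R V + (1 - zeta^*) *: (mxC R V)^T.

Lemma tl_sigE (R : realType) (n : nat) (V : 'M[int]_n) (zeta : R[i]) :
  tl_sig V zeta = signature (Hm V zeta).
Proof. by []. Qed.

Lemma charH (R : realType) a b d (zeta : R[i]) :
  let U := (1 - zeta)%:P in let W := (1 - zeta^*)%:P in let r := U + W in
  let A := (a%:~R : R[i])%:P in let B := (b%:~R : R[i])%:P in let D := (d%:~R : R[i])%:P in
  let F := 'X^2 - r * 'X - U * W in let G := r^+2 - r * 'X in
  char_poly (Hm (Vm a b d) zeta) = F^+2 + F * G * (A + D) + G^+2 * (A * D - B^+2).
Proof.
move=> U W r A B D F G.
rewrite /char_poly.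
have -> : char_poly_mx (Hm (Vm a b d) zeta) = \matrix_(i < 4, j < 4)
   ('X *+ (i == j)%N - ((1 - zeta) * (vf a b d i j)%:~R + (1 - zeta^*) * (vf a b d j i)%:~R)%:P).
  by apply/matrixP => i j; rewrite !mxE.
rewrite (det4f (fun i j => 'X *+ (i == j)%N - ((1 - zeta) * (vf a b d i j)%:~R + (1 - zeta^*) * (vf a b d j i)%:~R)%:P)) /d4 /d3 /subf /bump /vf /=.
rewrite /F /G /r /U /W /A /B /D. rewrite !rmorphD !rmorphM /=. ring.
Qed.

End B2.


Section S1.
Local Open Scope complex_scope.
Local Open Scope ring_scope.
Variable R : realType.
Local Notation C := R[i].

Lemma conjE (x y : R) : (Complex x y)^* = Complex x (- y).
Proof. by []. Qed.

Lemma quadC (u v : C) : ('X - u%:P)*('X - v%:P) = 'X^2 - (u+v)%:P*'X + (u*v)%:P.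
Proof. rewrite rmorphD rmorphM /=; ring. Qed.

Lemma polyCC_M (x y : R) : (x%:C)%:P * (y%:C)%:P = ((x * y)%:C)%:P :> {poly C}.
Proof. by rewrite -rmorphM /= -rmorphM. Qed.

Lemma fact_gen (m nu : R) (u v : C) : m * nu = 1 -> u + v = (2 - nu)%:C -> u * v = 1 ->
  (1 - 'X)^+2 * (m%:C)%:P + 'X = (m%:C)%:P * (('X - u%:P) * ('X - v%:P)).
Proof.
move=> hm huv hp; rewrite quadC huv hp.
apply/eqP; rewrite -subr_eq0; apply/eqP.
have e : ((2 - nu)%:C)%:P = 2 - (nu%:C)%:P :> {poly C}.
  by rewrite !rmorphB /= !rmorph_nat.
rewrite e.
transitivity ('X * (1 - (m%:C)%:P * (nu%:C)%:P)); first ring.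
by rewrite polyCC_M hm !rmorph1 subrr mulr0.
Qed.

Lemma eig_count n (A : 'M[C]_n) (L : seq C) :
  char_poly A = \prod_(z <- L) ('X - z%:P) -> forall P, count P (eigenseq A) = count P L.
Proof.
move=> hA P; rewrite /eigenseq; case: closed_field_poly_normal => r /= hr.
have : perm_eq r L.
  apply: prod_XsubC_eq; rewrite -hA.
  by move: hr; rewrite (monicP (char_poly_monic A)) scale1r => <-.
by move/permP => ->.
Qed.
Lemma intC (x : int) : ((x%:~R : R)%:C) = (x%:~R : C).
Proof. by rewrite rmorph_int. Qed.
End S1.


Section S2.
Local Open Scope complex_scope.
Local Open Scope ring_scope.
Variable R : realType.
Local Notation C := R[i].


Lemma alex_fact (a b d : int) (m1 m2 nu1 nu2 : R) (w1 w2 u v : C) :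
  m1 + m2 = (a + d)%:~R -> m1 * m2 = (a * d - b ^+ 2)%:~R ->
  m1 * nu1 = 1 -> m2 * nu2 = 1 ->
  w1 + w2 = (2 - nu1)%:C -> w1 * w2 = 1 -> u + v = (2 - nu2)%:C -> u * v = 1 ->
  alexC R (Vm a b d) = ((m1 * m2)%:C)%:P * (('X - w1%:P) * ('X - w2%:P)) * (('X - u%:P) * ('X - v%:P)).
Proof.
move=> hs hp h1 h2 hw1 hw2 hu1 hu2.
rewrite alexV /=.
have hAD : (a%:~R : C)%:P + (d%:~R : C)%:P = (m1%:C)%:P + (m2%:C)%:P.
  by rewrite -!rmorphD; congr polyC; rewrite hs rmorph_int.
have hB : (a%:~R : C)%:P * (d%:~R : C)%:P - (b%:~R : C)%:P ^+ 2 = (m1%:C)%:P * (m2%:C)%:P.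
  rewrite polyCC_M hp intC -rmorphM -rmorphXn -rmorphB; congr polyC.
  by rewrite rmorphB rmorphM rmorphXn.
transitivity ((1 - 'X)^+4 * ((a%:~R : C)%:P * (d%:~R : C)%:P - (b%:~R : C)%:P ^+ 2)
   + 'X * (1 - 'X)^+2 * ((a%:~R : C)%:P + (d%:~R : C)%:P) + 'X ^+ 2); first ring.
rewrite hAD hB.
transitivity (((m1%:C)%:P * (('X - w1%:P) * ('X - w2%:P))) * ((m2%:C)%:P * (('X - u%:P) * ('X - v%:P)))); last by rewrite -polyCC_M; ring.
rewrite -(fact_gen h2 hu1 hu2) -(fact_gen h1 hw1 hw2). ring.
Qed.
End S2.


Section S3.
Local Open Scope complex_scope.
Local Open Scope ring_scope.
Variable R : realType.
Local Notation C := R[i].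

Definition sq (r mu : R) := Num.sqrt (r ^+ 2 * (1 - mu) ^+ 2 + 4 * r).
Definition lp (r mu : R) := (r * (1 + mu) + sq r mu) / 2.
Definition lm (r mu : R) := (r * (1 + mu) - sq r mu) / 2.

Lemma sq2 (r mu : R) : 0 <= r -> sq r mu ^+ 2 = r ^+ 2 * (1 - mu) ^+ 2 + 4 * r.
Proof.
move=> hr; rewrite sqr_sqrtr //; apply: addr_ge0; last lra.
by apply: mulr_ge0; apply: sqr_ge0.
Qed.

Lemma lpm_sum (r mu : R) : lp r mu + lm r mu = r * (1 + mu).
Proof. rewrite /lp /lm; lra. Qed.

Lemma lpm_prod (r mu : R) : 0 <= r -> lp r mu * lm r mu = r ^+ 2 * mu - r.
Proof.
move=> hr; have h := sq2 mu hr.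
rewrite /lp /lm.
transitivity (((r * (1 + mu)) ^+ 2 - sq r mu ^+ 2) / 4); first by field.
by rewrite h; field.
Qed.

Lemma quad_real (r mu : R) : 0 <= r ->
  'X^2 - (r%:C)%:P * (1 + (mu%:C)%:P) * 'X + ((r%:C)%:P ^+ 2 * (mu%:C)%:P - (r%:C)%:P)
  = ('X - ((lp r mu)%:C)%:P) * ('X - ((lm r mu)%:C)%:P) :> {poly C}.
Proof.
move=> hr; rewrite quadC.
have h1 : (lp r mu)%:C + (lm r mu)%:C = r%:C * (1 + mu%:C).
  by rewrite -rmorphD lpm_sum rmorphM rmorphD rmorph1.
have h2 : (lp r mu)%:C * (lm r mu)%:C = r%:C ^+ 2 * mu%:C - r%:C.
  by rewrite -rmorphM lpm_prod // rmorphB rmorphM rmorphXn.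
rewrite h1 h2 ?rmorphB ?rmorphM ?rmorphD ?rmorphXn ?rmorph1 /=; ring.
Qed.

Lemma zeta_id (x y : R) : x ^+ 2 + y ^+ 2 = 1 ->
  (1 - Complex x y) * (1 - (Complex x y)^*) = (2 - 2 * x)%:C /\
  (1 - Complex x y) + (1 - (Complex x y)^*) = (2 - 2 * x)%:C.
Proof.
move=> h; split; apply/eqP; rewrite eq_complex /=; apply/andP; split; apply/eqP; nra.
Qed.
End S3.


Section S4.
Local Open Scope complex_scope.
Local Open Scope ring_scope.
Variable R : realType.
Local Notation C := R[i].

Lemma char_fact (a b d : int) (m1 m2 x y : R) :
  m1 + m2 = (a + d)%:~R -> m1 * m2 = (a * d - b ^+ 2)%:~R ->
  x ^+ 2 + y ^+ 2 = 1 -> 0 <= 2 - 2 * x ->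
  char_poly (Hm (Vm a b d) (Complex x y)) =
  \prod_(z <- [:: (lp (2 - 2 * x) m1)%:C; (lm (2 - 2 * x) m1)%:C;
                  (lp (2 - 2 * x) m2)%:C; (lm (2 - 2 * x) m2)%:C]) ('X - z%:P).
Proof.
move=> hs hp hxy hr.
have [e1 e2] := zeta_id hxy.
rewrite charH /=.
rewrite (_ : (1 - Complex x y)%:P * (1 - (Complex x y)^*)%:P = ((2 - 2 * x)%:C)%:P :> {poly C}); last by rewrite -rmorphM e1.
rewrite (_ : (1 - Complex x y)%:P + (1 - (Complex x y)^*)%:P = ((2 - 2 * x)%:C)%:P :> {poly C}); last by rewrite -rmorphD e2.
have hAD : (a%:~R : C)%:P + (d%:~R : C)%:P = (m1%:C)%:P + (m2%:C)%:P.
  by rewrite -!rmorphD; congr polyC; rewrite hs rmorph_int.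
have hB : (a%:~R : C)%:P * (d%:~R : C)%:P - (b%:~R : C)%:P ^+ 2 = (m1%:C)%:P * (m2%:C)%:P.
  rewrite polyCC_M hp intC -rmorphM -rmorphXn -rmorphB; congr polyC.
  by rewrite rmorphB rmorphM rmorphXn.
rewrite hAD hB !big_cons big_nil mulr1 mulrA -!quad_real //; ring.
Qed.
End S4.


Section S5.
Local Open Scope complex_scope.
Local Open Scope ring_scope.
Variable R : realType.
Local Notation C := R[i].

Lemma gt0C (x : R) : (0 < x%:C :> C) = (0 < x).
Proof. by rewrite ltcE /= eqxx. Qed.
Lemma lt0C (x : R) : (x%:C < 0 :> C) = (x < 0).
Proof. by rewrite ltcE /= eqxx. Qed.

Lemma negB (v : R) : v < 0 -> ((0 < v) = false) * ((v < 0) = true).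
Proof. by move=> h; split => //; apply/negbTE; rewrite -leNgt ltW. Qed.
Lemma posB (v : R) : 0 < v -> ((0 < v) = true) * ((v < 0) = false).
Proof. by move=> h; split => //; apply/negbTE; rewrite -leNgt ltW. Qed.

Lemma lpm_le (r mu : R) : lm r mu <= lp r mu.
Proof. rewrite /lm /lp; have := sqrtr_ge0 (r ^+ 2 * (1 - mu) ^+ 2 + 4 * r); rewrite /sq; lra. Qed.

Lemma sign_small (r mu : R) : 0 < r -> r * mu < 1 -> lm r mu < 0 /\ 0 < lp r mu.
Proof.
move=> hr h; have hp := lpm_prod mu (ltW hr); have hl := lpm_le r mu.
have : lp r mu * lm r mu < 0 by rewrite hp; nra.
move=> hneg; split; nra.
Qed.

Lemma sign_big (r mu : R) : 0 < r -> 0 < mu -> 1 < r * mu -> 0 < lm r mu /\ 0 < lp r mu.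
Proof.
move=> hr hm h; have hp := lpm_prod mu (ltW hr); have hl := lpm_le r mu.
have hs := lpm_sum r mu.
have : 0 < lp r mu * lm r mu by rewrite hp; nra.
move=> hpos.
have : 0 < lp r mu by nra.
move=> hlp; split => //; nra.
Qed.

Lemma sig_val (a b d : int) (m1 m2 x y : R) :
  m1 + m2 = (a + d)%:~R -> m1 * m2 = (a * d - b ^+ 2)%:~R ->
  x ^+ 2 + y ^+ 2 = 1 -> x < 1 -> 0 < m1 -> m2 < 0 ->
  ((2 - 2 * x) * m1 < 1 -> tl_sig (Vm a b d) (Complex x y) = 0) /\
  (1 < (2 - 2 * x) * m1 -> tl_sig (Vm a b d) (Complex x y) = 2).
Proof.
move=> hs hp hxy hx h1 h2.
have hr : 0 < 2 - 2 * x by lra.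
rewrite tl_sigE /signature !(eig_count (char_fact hs hp hxy (ltW hr))) /=.
rewrite !gt0C !lt0C.
have [a1 a2] : lm (2 - 2 * x) m2 < 0 /\ 0 < lp (2 - 2 * x) m2 by apply: sign_small => //; nra.
rewrite (negB a1).1 (negB a1).2 (posB a2).1 (posB a2).2.
split => H.
  have [b1 b2] := sign_small hr H.
  by rewrite (negB b1).1 (negB b1).2 (posB b2).1 (posB b2).2.
have [b1 b2] := sign_big hr h1 H.
by rewrite (posB b1).1 (posB b1).2 (posB b2).1 (posB b2).2.
Qed.
End S5.


Section S6.
Local Open Scope complex_scope.
Local Open Scope ring_scope.
Variable R : realType.
Lemma circ_bound (c c0 s s0 : R) : -1 <= c <= 1 -> -1 <= c0 <= 1 -> 0 <= s -> 0 <= s0 ->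
  s ^+ 2 = 1 - c ^+ 2 -> s0 ^+ 2 = 1 - c0 ^+ 2 ->
  (c - c0) ^+ 2 + (s - s0) ^+ 2 <= 4 * `|c - c0|.
Proof.
move=> /andP [h1 h2] /andP [h3 h4] hs hs0 e1 e2.
have hss : (s - s0) ^+ 2 <= `|s ^+ 2 - s0 ^+ 2|.
  have [hle|hlt] := lerP s0 s.
    rewrite ger0_norm; last by nra.
    nra.
  rewrite ltr0_norm; last by nra.
  nra.
have e3 : s ^+ 2 - s0 ^+ 2 = - ((c - c0) * (c + c0)) by rewrite e1 e2; ring.
rewrite e3 normrN normrM in hss.
have hcc : `|c + c0| <= 2 by rewrite ler_norml; apply/andP; split; lra.
have hn : 0 <= `|c - c0| by [].
have hcc2 : `|c - c0| <= 2 by rewrite ler_norml; apply/andP; split; lra.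
have hsq : (c - c0) ^+ 2 = `|c - c0| ^+ 2 by rewrite real_normK // num_real.
rewrite hsq; nra.
Qed.

Lemma diff_test (a b x y : R) : (Complex a b - Complex x y) = Complex (a - x) (b - y).
Proof. by []. Qed.
End S6.


Section S7.
Local Open Scope complex_scope.
Local Open Scope ring_scope.
Variable R : realType.
Local Notation C := R[i].

Lemma natzR (n : nat) : ((n%:Z)%:~R : R) = n%:R.
Proof. by rewrite -pmulrn. Qed.

Lemma sqrt_facts (x : R) : 0 <= x -> 0 <= Num.sqrt x /\ Num.sqrt x ^+ 2 = x.
Proof. by move=> h; split; [exact: sqrtr_ge0 | exact: sqr_sqrtr]. Qed.

Variables (p q : nat).
Hypothesis hq : (0 < q)%N.

Let P : R := p%:R.
Let Q : R := q%:R.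
Let S : R := Num.sqrt (P ^+ 2 + 4).
Let m1 : R := Q * (S - P) / 2.
Let m2 : R := - (Q * (S + P) / 2).
Let nu1 : R := (P + S) / (2 * Q).
Let nu2 : R := - ((S - P) / (2 * Q)).
Let c : R := 1 - nu1 / 2.
Let s : R := Num.sqrt (1 - c ^+ 2).
Let w1 : C := Complex c s.
Let ka : R := 2 - nu2.
Let T : R := Num.sqrt (ka ^+ 2 - 4).
Let u : C := ((ka + T) / 2)%:C.
Let v : C := ((ka - T) / 2)%:C.

Lemma Qpos : 0 < Q.
Proof. by rewrite /Q ltr0n. Qed.
Lemma Pge0 : 0 <= P.
Proof. by rewrite /P ler0n. Qed.
Lemma Sfacts : 0 <= S /\ S ^+ 2 = P ^+ 2 + 4.
Proof. apply: sqrt_facts; have := Pge0; nra. Qed.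
Lemma S_gt : P < S /\ S <= P + 2.
Proof. have := Pge0; have [h1 h2] := Sfacts; split; nra. Qed.

Lemma m1_pos : 0 < m1.
Proof. have := Qpos; have [h1 h2] := S_gt; rewrite /m1; nra. Qed.
Lemma m2_neg : m2 < 0.
Proof. have := Qpos; have := Pge0; have [h1 h2] := S_gt; rewrite /m2; nra. Qed.
Lemma hnu1 : m1 * nu1 = 1.
Proof.
have := Qpos; have [h1 h2] := Sfacts; rewrite /m1 /nu1 => hQ.
transitivity ((S ^+ 2 - P ^+ 2) / 4); first by field; rewrite lt0r_neq0.
by rewrite h2; field.
Qed.
Lemma hnu2 : m2 * nu2 = 1.
Proof.
have := Qpos; have [h1 h2] := Sfacts; rewrite /m2 /nu2 => hQ.
transitivity ((S ^+ 2 - P ^+ 2) / 4); first by field; rewrite lt0r_neq0.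
by rewrite h2; field.
Qed.

Lemma hsum : m1 + m2 = ((0 : int) + - (p * q)%N%:Z)%:~R.
Proof. rewrite add0r intrN natzR natrM /m1 /m2 -/P -/Q. by field. Qed.

Lemma hprod : m1 * m2 = ((0 : int) * - (p * q)%N%:Z - (q%:Z) ^+ 2)%:~R.
Proof.
rewrite mul0r add0r intrN rmorphXn /= natzR -/Q /m1 /m2.
have [h1 h2] := Sfacts.
transitivity (- (Q ^+ 2 * (S ^+ 2 - P ^+ 2) / 4)); first by field.
by rewrite h2; field.
Qed.


Lemma nu1_pos : 0 < nu1.
Proof.
have := Qpos; have := Pge0; have [h1 h2] := S_gt; rewrite /nu1 => hP hQ.
by apply: divr_gt0; nra.
Qed.

Lemma nu2_neg : nu2 < 0.
Proof.
have := Qpos; have [h1 h2] := S_gt; rewrite /nu2 => hQ.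
rewrite oppr_lt0; apply: divr_gt0; nra.
Qed.

Lemma nu1Q : nu1 * Q = (P + S) / 2.
Proof. have := Qpos; rewrite /nu1 => hQ; field; rewrite lt0r_neq0 //. Qed.

Section Nu4.
Hypothesis h4 : nu1 < 4.

Lemma c_bounds : -1 < c < 1.
Proof. have := nu1_pos; move: h4; rewrite /c; generalize nu1 => n h h0; apply/andP; split; lra. Qed.

Lemma s_facts : 0 < s /\ s ^+ 2 = 1 - c ^+ 2.
Proof.
have /andP [h1 h2] := c_bounds.
have hp : 0 < 1 - c ^+ 2 by nra.
by split; [rewrite /s sqrtr_gt0 | rewrite /s sqr_sqrtr // ltW].
Qed.

Lemma w1_inS : inS w1.
Proof.
have [h1 h2] := s_facts; split; last by rewrite -complexIm gt0C.
rewrite normc_def /=.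
have -> : c ^+ 2 + s ^+ 2 = 1 by rewrite h2; lra.
by rewrite sqrtr1.
Qed.

Lemma w1_sum : w1 + w1^* = (2 - nu1)%:C.
Proof. apply/eqP; rewrite eq_complex /=; apply/andP; split; apply/eqP; rewrite /c; lra. Qed.

Lemma w1_prod : w1 * w1^* = 1.
Proof.
have [h1 h2] := s_facts.
apply/eqP; rewrite eq_complex /=; apply/andP; split; apply/eqP; nra.
Qed.
End Nu4.

Lemma ka_ge : 2 < ka.
Proof. have := nu2_neg; rewrite /ka; lra. Qed.

Lemma uv_sum : u + v = (2 - nu2)%:C.
Proof. rewrite /u /v -rmorphD; have -> : (ka + T) / 2 + (ka - T) / 2 = 2 - nu2 by rewrite /ka; lra. by []. Qed.

Lemma uv_prod : u * v = 1.
Proof.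
rewrite /u /v -rmorphM.
have hk := ka_ge.
have [h1 h2] : 0 <= T /\ T ^+ 2 = ka ^+ 2 - 4 by apply: sqrt_facts; nra.
have -> : (ka + T) / 2 * ((ka - T) / 2) = 1.
  transitivity ((ka ^+ 2 - T ^+ 2) / 4); first by field.
  by rewrite h2; field.
by [].
Qed.

Lemma thr (m n x : R) : 0 < m -> m * n = 1 ->
  (1 - n / 2 < x -> (2 - 2 * x) * m < 1) /\ (x < 1 - n / 2 -> 1 < (2 - 2 * x) * m).
Proof. move=> hm hmn; split => h; nra. Qed.

Lemma inS_xy (x y : R) : inS (Complex x y) -> x ^+ 2 + y ^+ 2 = 1 /\ 0 < y.
Proof.
case; rewrite normc_def -complexIm gt0C /= => h hy; split => //.
have : Num.sqrt (x ^+ 2 + y ^+ 2) = 1 by case: h.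
move=> h1; rewrite -(@sqr_sqrtr _ (x ^+ 2 + y ^+ 2)) ?h1 ?expr1n //.
by apply: addr_ge0; apply: sqr_ge0.
Qed.

Let V := Vm 0 (q%:Z) (- (p * q)%N%:Z).
Let K : C := (m1 * m2)%:C.

Lemma K0 : K != 0.
Proof.
have h1 := m1_pos; have h2 := m2_neg.
by rewrite /K fmorph_eq0 mulf_eq0 negb_or (lt0r_neq0 h1) (ltr0_neq0 h2).
Qed.

Lemma u_real : u \is Num.real.
Proof. by rewrite /u complex_real. Qed.
Lemma v_real : v \is Num.real.
Proof. by rewrite /v complex_real. Qed.

Section Nu4b.
Hypothesis h4 : nu1 < 4.

Lemma alexVf : alexC R V = K%:P * (('X - w1%:P) * ('X - w1^*%:P)) * (('X - u%:P) * ('X - v%:P)).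
Proof. exact: alex_fact hsum hprod hnu1 hnu2 w1_sum (w1_prod h4) uv_sum uv_prod. Qed.

Lemma root_char z : root (alexC R V) z = [|| z == w1, z == w1^*, z == u | z == v].
Proof. by rewrite alexVf !rootM rootC !root_XsubC (negbTE K0) /= !orbA. Qed.

Lemma w1_ne : (w1 == w1^*) = false /\ (w1 == u) = false /\ (w1 == v) = false /\
  (w1^* == u) = false /\ (w1^* == v) = false /\ (w1^* == w1) = false.
Proof.
have [h1 _] := s_facts h4.
rewrite /w1 /u /v !eq_complex /=.
have -> : (s == - s) = false by apply/negbTE; apply/eqP; lra.
have -> : (s == 0) = false by apply/negbTE; apply/eqP; lra.
have -> : (- s == 0) = false by apply/negbTE; apply/eqP; lra.
have -> : (- s == s) = false by apply/negbTE; apply/eqP; lra.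
by rewrite !andbF.
Qed.

Lemma construct :
  [/\ inS w1, seifert V,
      root (alexC R V) w1 /\ root (alexC R V) w1^*,
      (forall z : C, root (alexC R V) z -> z \isn't Num.real -> z = w1 \/ z = w1^*) /\
      ~~ (('X - w1%:P) ^+ 2 %| alexC R V) /\ ~~ (('X - w1^*%:P) ^+ 2 %| alexC R V)
    & exists c : int, c != 0 /\
      forall zeta : C, inS zeta ->
        ('Re w1 < 'Re zeta -> tl_sig V zeta = 0) /\
        ('Re zeta < 'Re w1 -> tl_sig V zeta = c)].
Proof.
have [n1 [n2 [n3 [n4 [n5 n6]]]]] := w1_ne.
split.
- exact: w1_inS.
- exact: seifV.
- by rewrite !root_char !eqxx /= ?orbT.
- split; [|split].
  + move=> z; rewrite root_char => /or4P [/eqP->|/eqP->|/eqP->|/eqP->] hn; [by left|by right| |].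
      by rewrite u_real in hn.
    by rewrite v_real in hn.
  + have -> : alexC R V = ('X - w1%:P) * (K%:P * ('X - w1^*%:P) * (('X - u%:P) * ('X - v%:P))).
      by rewrite alexVf; ring.
    rewrite expr2 dvdp_mul2l ?polyXsubC_eq0 // dvdp_XsubCl !rootM rootC !root_XsubC (negbTE K0).
    by rewrite n1 n2 n3.
  + have -> : alexC R V = ('X - w1^*%:P) * (K%:P * ('X - w1%:P) * (('X - u%:P) * ('X - v%:P))).
      by rewrite alexVf; ring.
    rewrite expr2 dvdp_mul2l ?polyXsubC_eq0 // dvdp_XsubCl !rootM rootC !root_XsubC (negbTE K0).
    by rewrite n4 n5 n6.
- exists 2; split => //.
  move=> [x y] hz.
  have [hxy hy] := inS_xy hz.
  have hx : x < 1 by nra.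
  have [s0 s2] := sig_val hsum hprod hxy hx m1_pos m2_neg.
  have [t1 t2] := thr x m1_pos hnu1.
  rewrite -!complexRe !ltcR /=.
  by split => h; [apply: s0; apply: t1 | apply: s2; apply: t2].
Qed.
Lemma close (c0 s0 eps : R) : c0 ^+ 2 + s0 ^+ 2 = 1 -> 0 < s0 -> 0 < eps ->
  `|nu1 - (2 - 2 * c0)| < eps ^+ 2 / 2 -> `|w1 - Complex c0 s0| < Complex eps 0.
Proof.
move=> hcs hs0 he hd.
have [hs1 hs2] := s_facts h4.
have /andP [hc1 hc2] := c_bounds h4.
have -> : w1 - Complex c0 s0 = Complex (c - c0) (s - s0) by [].
rewrite normc_def /= (_ : Complex eps 0 = eps%:C) // ltcR.
have hb : (c - c0) ^+ 2 + (s - s0) ^+ 2 <= 4 * `|c - c0|.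
  apply: circ_bound => //. all: try (apply/andP; split; nra). all: try lra.
have e : `|c - c0| = `|nu1 - (2 - 2 * c0)| / 2.
  rewrite /c (_ : 1 - nu1 / 2 - c0 = - ((nu1 - (2 - 2 * c0)) / 2)); last by field.
  rewrite normrN normrM; congr (_ * _); by rewrite ger0_norm // invr_ge0 ler0n.
have hX : 0 <= (c - c0) ^+ 2 + (s - s0) ^+ 2 by apply: addr_ge0; apply: sqr_ge0.
have [hT1 hT2] := sqrt_facts hX.
move: hT1 hT2; set Tt := Num.sqrt _ => hT1 hT2.
rewrite e in hb.
nra.
Qed.

Lemma final (c0 s0 eps : R) : c0 ^+ 2 + s0 ^+ 2 = 1 -> 0 < s0 -> 0 < eps ->
  `|nu1 - (2 - 2 * c0)| < eps ^+ 2 / 2 ->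
  exists (w' : R[i]) (n : nat) (V : 'M[int]_n),
    [/\ inS w' /\ `|w' - Complex c0 s0| < Complex eps 0, seifert V,
        root (alexC R V) w' /\ root (alexC R V) w'^*,
        (forall z : R[i], root (alexC R V) z -> z \isn't Num.real ->
           z = w' \/ z = w'^*) /\
        ~~ (('X - w'%:P) ^+ 2 %| alexC R V) /\ ~~ (('X - w'^*%:P) ^+ 2 %| alexC R V)
      & exists c : int, c != 0 /\
        forall zeta : R[i], inS zeta ->
          ('Re w' < 'Re zeta -> tl_sig V zeta = 0) /\
          ('Re zeta < 'Re w' -> tl_sig V zeta = c)].
Proof.
move=> hcs hs0 he hd.
have [A1 A2 A3 A4 A5] := construct.
exists w1, 4%N, V; split => //.
split => //; exact: close.
Qed.
End Nu4b.
End S7.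

End Aux.
Import Aux.
Unset Implicit Arguments.

Theorem mainTheorem5 (R : realType) (w : R[i]) (eps : R) :
  inS w -> 0 < eps ->
  exists (w' : R[i]) (n : nat) (V : 'M[int]_n),
    [/\ inS w' /\ `|w' - w| < Complex eps 0, seifert V,
        (* the nonreal roots of Delta_V are exactly w' and conj w' *)
        root (alexC R V) w' /\ root (alexC R V) w'^*,
        (forall z : R[i], root (alexC R V) z -> z \isn't Num.real ->
           z = w' \/ z = w'^*) /\
        (* both simple *)
        ~~ (('X - w'%:P) ^+ 2 %| alexC R V) /\ ~~ (('X - w'^*%:P) ^+ 2 %| alexC R V)
      & exists c : int, c != 0 /\
        forall zeta : R[i], inS zeta ->
          ('Re w' < 'Re zeta -> tl_sig V zeta = 0) /\
          ('Re zeta < 'Re w' -> tl_sig V zeta = c)].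
Proof.
move=> hw heps; case: w hw => c0 s0 hw.
have [hcs hs0] := inS_xy hw.
have hc1 : -1 < c0 by nra.
have hc2 : c0 < 1 by nra.
pose y0 := 2 - 2 * c0.
have hy1 : 0 < y0 by rewrite /y0; lra.
have hy2 : y0 < 4 by rewrite /y0; lra.
have he2 : 0 < eps ^+ 2 by apply: exprn_gt0.
pose i1 := 2 / eps ^+ 2.
pose i2 := 1 / (4 - y0).
have hi1 : i1 * eps ^+ 2 = 2 by rewrite /i1; field; rewrite lt0r_neq0.
have hi2 : i2 * (4 - y0) = 1 by rewrite /i2; field; rewrite lt0r_neq0 // subr_gt0.
have hi1p : 0 <= i1 by rewrite /i1 divr_ge0 // ltW.
have hi2p : 0 <= i2 by rewrite /i2 divr_ge0 // subr_ge0 ltW.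
pose q := (Num.truncn (i1 + i2)).+1.
have hqB : i1 + i2 < q%:R by exact: truncnS_gt.
have hq : (0 < q)%N by [].
have hyq : 0 <= y0 * q%:R by rewrite mulr_ge0 // ltW.
pose p := Num.truncn (y0 * q%:R).
have /andP [hp1 hp2] := truncn_itv hyq.
rewrite -/p -natr1 in hp1 hp2.
have hQ : 0 < (q%:R : R) by rewrite ltr0n.
have [hS1 hS2] := S_gt R p.
have hN := nu1Q R p hq.
move: hN hS1 hS2 hp1 hp2.
set S := Num.sqrt _.
set nu := (_ / (2 * q%:R)).
set P := p%:R.
set Q := q%:R.
move=> hN hS1 hS2 hp1 hp2.
have hA : Q * eps ^+ 2 > 2 by nra.
have hB : Q * (4 - y0) > 1 by nra.
have h4 : nu < 4 by nra.
have hd : `|nu - (2 - 2 * c0)| < eps ^+ 2 / 2.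
  rewrite -/y0.
  have hu1 : (nu - y0) * Q <= 1 by nra.
  have hu2 : (y0 - nu) * Q <= 1 by nra.
  case: (lerP 0 (nu - y0)) => h; [rewrite ger0_norm // | rewrite ltr0_norm //]; nra.
by move: (final hq h4 hcs hs0 heps hd).
Qed.
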